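(* Let $I$ and $J$ be componentwise polymatroidal monomial ideals in $K[x,y]$. Then $IJ$ is also componentwise polymatroidal. In particular, all powers of a componentwise polymatroidal ideal in $K[x,y]$ are componentwise polymatroidal.
   Context: $G(I)$ is the minimal monomial generating set. A monomial ideal generated in a single degree is polymatroidal if for all $u,v\in G(I)$ and all variables $z$ with $\deg_{z}(u)>\deg_{z}(v)$ ($\deg_z$ = exponent of $z$) there exists a variable $w$ with $\deg_{w}(u)<\deg_{w}(v)$ and $w(u/z)\in I$. $I_{\langle j\rangle}$ is the ideal generated by all degree-$j$ monomials of $I$; $I$ is componentwise polymatroidal if every nonzero $I_{\langle j\rangle}$ is polymatroidal. *)

(* Defs.v *)
From mathcomp Require Import all_boot.
Set Implicit Arguments. Unset Strict Implicit. Unset Printing Implicit Defensive.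

(* Monomials of K[x,y]: exponent vectors indexed by the two variables 'I_2
   (x = variable 0, y = variable 1). A monomial ideal is identified with the
   set of monomials it contains (a monomial ideal is spanned by its monomials). *)
Definition mon := {ffun 'I_2 -> nat}.

Definition mdeg (u : mon) : nat := \sum_(i < 2) u i.
Definition mdvd (u v : mon) : Prop := forall i, u i <= v i.
Definition mmul (u v : mon) : mon := [ffun i => u i + v i].
Definition one_mon : mon := [ffun _ => 0].
(* w (u / z) : the exponent of z lowered by one, that of w raised by one *)
Definition mexch (u : mon) (z w : 'I_2) : mon :=
  [ffun i => (u i - (i == z)) + (i == w)].

Definition is_monideal (I : mon -> Prop) : Prop :=
  forall u v, I u -> mdvd u v -> I v.

Definition mingen (I : mon -> Prop) (u : mon) : Prop :=
  I u /\ forall v, I v -> mdvd v u -> v = u.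

Definition polymatroidal (I : mon -> Prop) : Prop :=
  (exists d, forall u, mingen I u -> mdeg u = d) /\
  forall u v (z : 'I_2), mingen I u -> mingen I v -> v z < u z ->
    exists w : 'I_2, u w < v w /\ I (mexch u z w).

Definition comp (I : mon -> Prop) (j : nat) : mon -> Prop :=
  fun m => exists u, I u /\ mdeg u = j /\ mdvd u m.

Definition cw_polymatroidal (I : mon -> Prop) : Prop :=
  forall j, (exists m, comp I j m) -> polymatroidal (comp I j).

Definition mprod (I J : mon -> Prop) : mon -> Prop :=
  fun m => exists u v, I u /\ J v /\ m = mmul u v.

Fixpoint mpow (I : mon -> Prop) (n : nat) : mon -> Prop :=
  match n with
  | 0 => fun _ => True
  | k.+1 => mprod I (mpow I k)
  end.

(* Main.v *)
Require Import Defs.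
From mathcomp Require Import all_boot zify.
Set Implicit Arguments. Unset Strict Implicit. Unset Printing Implicit Defensive.

Definition o0 : 'I_2 := @Ordinal 2 0 isT.
Definition o1 : 'I_2 := @Ordinal 2 1 isT.
Definition oth (z : 'I_2) : 'I_2 := if z == o0 then o1 else o0.

Lemma I2_cases (i : 'I_2) : i = o0 \/ i = o1.
Proof. case: i => [[|[|n]] H]; [left|right|]; try by apply/val_inj. by []. Qed.

Lemma cases_zw z i : i = z \/ i = oth z.
Proof. by case: (I2_cases z) => ->; case: (I2_cases i) => ->; auto. Qed.

Lemma oth_neq z : (z == oth z) = false.
Proof. by case: (I2_cases z) => ->. Qed.
Lemma oth_neq' z : (oth z == z) = false.
Proof. by case: (I2_cases z) => ->. Qed.

Lemma mdegE (u : mon) : mdeg u = u o0 + u o1.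
Proof.
rewrite /mdeg big_ord_recl big_ord_recl big_ord0.
by rewrite addn0; congr (u _ + u _); apply/val_inj.
Qed.

Lemma mdeg_gen z (u : mon) : mdeg u = u z + u (oth z).
Proof. rewrite mdegE; case: (I2_cases z) => -> /=; rewrite /oth /=; lia. Qed.

Lemma mon_eq z (u v : mon) : u z = v z -> u (oth z) = v (oth z) -> u = v.
Proof. move=> h1 h2; apply/ffunP => i; by case: (cases_zw z i) => ->. Qed.

Definition mk z a b : mon := [ffun i => if i == z then a else b].
Lemma mkz z a b : mk z a b z = a. Proof. by rewrite ffunE eqxx. Qed.
Lemma mko z a b : mk z a b (oth z) = b. Proof. by rewrite ffunE oth_neq'. Qed.
Lemma mdeg_mk z a b : mdeg (mk z a b) = a + b.
Proof. by rewrite (mdeg_gen z) mkz mko. Qed.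

Lemma mdeg_le (a b : mon) : mdvd a b -> mdeg a <= mdeg b.
Proof. move=> h; rewrite !mdegE; have := h o0; have := h o1; lia. Qed.

Lemma mdvd_eq (a b : mon) : mdvd a b -> mdeg a = mdeg b -> a = b.
Proof.
move=> h; rewrite !mdegE => e; have h0 := h o0; have h1 := h o1.
apply: (@mon_eq o0) => /=; rewrite /oth /=; lia.
Qed.

Lemma mdvd_trans (a b c : mon) : mdvd a b -> mdvd b c -> mdvd a c.
Proof. move=> h1 h2 i; exact: leq_trans (h1 i) (h2 i). Qed.
Lemma mdvd_refl (a : mon) : mdvd a a. Proof. by move=> i. Qed.

Lemma mingen_of (Q : mon -> Prop) u k : Q u -> mdeg u = k -> mingen (Defs.comp Q k) u.
Proof.
move=> Qu du; split; first by exists u; split => //; split => //; exact: mdvd_refl.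
move=> v [m0 [Qm [dm m0v]]] vu.
have m0u : m0 = u by apply: mdvd_eq; [exact: mdvd_trans m0v vu| rewrite du].
apply: mdvd_eq => //; apply/eqP; rewrite eqn_leq mdeg_le //=.
by rewrite -m0u mdeg_le.
Qed.

Lemma mingen_comp (Q : mon -> Prop) u k : mingen (Defs.comp Q k) u -> Q u /\ mdeg u = k.
Proof.
move=> [[m0 [Qm [dm m0u]]] mn].
have : m0 = u by apply: mn => //; exists m0; split => //; split => //; exact: mdvd_refl.
by move=> <-.
Qed.

Definition Sx (Q : mon -> Prop) z k t := t <= k /\ Q (mk z t (k - t)).
Definition convex (X : nat -> Prop) := forall c a t, X c -> X a -> c <= t -> t <= a -> X t.
Definition convall (Q : mon -> Prop) := forall z k, convex (Sx Q z k).

Lemma Sx_of (Q : mon -> Prop) z (m : mon) k : Q m -> mdeg m = k -> Sx Q z k (m z).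
Proof.
move=> Qm dm; rewrite (mdeg_gen z) in dm; split; first lia.
have -> : mk z (m z) (k - m z) = m by apply: (@mon_eq z); rewrite ?mkz ?mko //; lia.
exact Qm.
Qed.

Lemma mexch_mk (u : mon) z : 0 < u z -> mexch u z (oth z) = mk z (u z).-1 (u (oth z)).+1.
Proof.
move=> h; apply: (@mon_eq z); rewrite ?mkz ?mko !ffunE ?eqxx ?oth_neq ?oth_neq' ?eqxx /=; lia.
Qed.

Lemma L1 (Q : mon -> Prop) : cw_polymatroidal Q -> convall Q.
Proof.
move=> cw z k.
have step : forall c a, Sx Q z k c -> Sx Q z k a -> c < a -> Sx Q z k a.-1.
  move=> c a [hc Qc] [ha Qa] ca.
  have mu := mingen_of Qa (mdeg_mk _ _ _).
  have mv := mingen_of Qc (mdeg_mk _ _ _).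
  rewrite !subnKC // in mu mv.
  have [_ ex] := cw k (ex_intro _ _ (proj1 mu)).
  have lt : (mk z c (k - c)) z < (mk z a (k - a)) z by rewrite !mkz.
  have [w' [lw cm]] := ex _ _ z mu mv lt.
  case: (cases_zw z w') => ew; subst w'.
    by rewrite !mkz in lw; lia.
  move: cm => [m0 [Qm [dm dv]]].
  rewrite mexch_mk ?mkz ?mko in dv; last lia.
  have e : m0 = mk z a.-1 (k - a).+1.
    by apply: mdvd_eq => //; rewrite mdeg_mk dm; lia.
  split; first lia.
  have -> : k - a.-1 = (k - a).+1 by lia.
  by rewrite -e.
move=> c a t Xc Xa ct ta.
have : forall d a, Sx Q z k a -> a = t + d -> Sx Q z k t.
  elim => [|d IH] a' Xa' e; first by rewrite e addn0 in Xa'.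
  apply: (IH a'.-1); last lia.
  apply: step Xc Xa' _; lia.
by move/(_ (a - t) a Xa); apply; lia.
Qed.

Lemma L2 (Q : mon -> Prop) : convall Q -> cw_polymatroidal Q.
Proof.
move=> cv j _; split; first by exists j => u /mingen_comp [].
move=> u v z mu mv lt.
have [Qu du] := mingen_comp mu; have [Qv dv] := mingen_comp mv.
have eu := mdeg_gen z u; have ev := mdeg_gen z v.
exists (oth z); split; first lia.
have Xu := Sx_of z Qu du; have Xv := Sx_of z Qv dv.
have [_ X] := cv z j _ _ (u z).-1 Xv Xu ltac:(lia) ltac:(lia).
have e : mexch u z (oth z) = mk z (u z).-1 (j - (u z).-1).
  rewrite mexch_mk; last lia.
  by congr mk; lia.
exists (mexch u z (oth z)); rewrite e; split => //; split; last exact: mdvd_refl.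
rewrite mdeg_mk; lia.
Qed.

Lemma sum_convex (X Y : nat -> Prop) : convex X -> convex Y ->
  convex (fun t => exists s1 s2, X s1 /\ Y s2 /\ t = s1 + s2).
Proof.
move=> cX cY c a t [c1 [c2 [Xc [Yc ec]]]] [a1 [a2 [Xa [Ya ea]]]] ct ta.
have : forall d a1 a2, X a1 -> Y a2 -> a1 + a2 = t + d ->
   exists s1 s2, X s1 /\ Y s2 /\ t = s1 + s2.
  elim => [|d IH] b1 b2 Xb Yb e.
    by exists b1, b2; split => //; split => //; lia.
  case: (ltnP c1 b1) => h.
    apply: (IH b1.-1 b2) => //; last lia.
    by apply: (cX c1 b1) => //; lia.
  apply: (IH b1 b2.-1) => //; last lia.
  by apply: (cY c2 b2) => //; lia.
move/(_ (a - t) a1 a2 Xa Ya); apply; lia.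
Qed.

Lemma Sx_lift1 (I : mon -> Prop) z k s : is_monideal I -> Sx I z k s -> Sx I z k.+1 s.
Proof.
move=> mI [hs Is]; split; first lia.
apply: (mI _ _ Is) => i; rewrite !ffunE; case: (i == z); lia.
Qed.

Lemma Sx_lift (I : mon -> Prop) z k k2 s : is_monideal I -> k <= k2 -> Sx I z k s -> Sx I z k2 s.
Proof.
move=> mI; elim: k2 => [|k2 IH] h X.
  have e : k = 0 by lia.
  by rewrite e in X.
case: (leqP k k2) => h'; first by apply: Sx_lift1 => //; apply: IH.
by have -> : k2.+1 = k by lia.
Qed.

Definition A (I J : mon -> Prop) z j i :=
  fun t => exists s1 s2, Sx I z i s1 /\ Sx J z (j - i) s2 /\ t = s1 + s2.

Lemma A_in (I J : mon -> Prop) z j t :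
  Sx (mprod I J) z j t -> exists i, i <= j /\ A I J z j i t.
Proof.
move=> [ht [u [v [Iu [Jv e]]]]].
have ez : t = u z + v z by rewrite -(mkz z t (j - t)) e ffunE.
have eo : j - t = u (oth z) + v (oth z) by rewrite -(mko z t (j - t)) e ffunE.
have du := mdeg_gen z u; have dv := mdeg_gen z v.
exists (mdeg u); split; first lia.
exists (u z), (v z); split; first exact: Sx_of.
split => //; apply: Sx_of => //; lia.
Qed.

Lemma A_out (I J : mon -> Prop) z j i t :
  i <= j -> A I J z j i t -> Sx (mprod I J) z j t.
Proof.
move=> ij [s1 [s2 [[h1 I1] [[h2 J2] e]]]]; split; first lia.
exists (mk z s1 (i - s1)), (mk z s2 (j - i - s2)); split => //; split => //.
apply: (@mon_eq z); rewrite !ffunE ?eqxx ?oth_neq' /=; lia.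
Qed.

Lemma chain (I J : mon -> Prop) z j p q t :
  is_monideal I -> is_monideal J -> convall I -> convall J ->
  forall n k k', k' = k + n -> k' <= j -> A I J z j k p -> A I J z j k' q ->
  (p <= t /\ t <= q \/ q <= t /\ t <= p) -> exists i, i <= j /\ A I J z j i t.
Proof.
move=> mI mJ cI cJ n.
have cA : forall i, convex (A I J z j i) by move=> i; apply: sum_convex.
elim: n q => [|n IH] q k k' ek kj Ap Aq bt.
  rewrite addn0 in ek; subst k'; exists k; split => //.
  by case: bt => [[h1 h2]|[h1 h2]]; [apply: (cA k p q) | apply: (cA k q p)].
have [s1 [s2 [X1 [X2 es]]]] := Ap.
have [r1 [r2 [Y1 [Y2 er]]]] := Aq.
have S1 : Sx I z (k + n) s1 by apply: (Sx_lift mI _ X1); lia.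
have S1' : Sx I z k' s1 by apply: (Sx_lift mI _ X1); lia.
have R2 : Sx J z (j - (k + n)) r2 by apply: (Sx_lift mJ _ Y2); lia.
have Am : A I J z j (k + n) (s1 + r2) by exists s1, r2.
have Am' : A I J z j k' (s1 + r2) by exists s1, r2.
have [h|h] : (p <= t /\ t <= s1 + r2 \/ s1 + r2 <= t /\ t <= p) \/
             (s1 + r2 <= t /\ t <= q \/ q <= t /\ t <= s1 + r2) by lia.
  by apply: (IH (s1 + r2) k (k + n)) => //; lia.
exists k'; split => //.
by case: h => [[h1 h2]|[h1 h2]]; [apply: (cA k' (s1 + r2) q) | apply: (cA k' q (s1 + r2))].
Qed.

Lemma L3 (I J : mon -> Prop) : is_monideal I -> is_monideal J ->
  convall I -> convall J -> convall (mprod I J).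
Proof.
move=> mI mJ cI cJ z j c a t Xc Xa ct ta.
have [k [kj Ac]] := A_in Xc; have [k' [kj' Aa]] := A_in Xa.
case: (leqP k k') => h.
  have [i [ij Ai]] := @chain I J z j c a t mI mJ cI cJ (k' - k) k k' (esym (subnKC h)) kj' Ac Aa (or_introl (conj ct ta)).
  exact: A_out Ai.
have [i [ij Ai]] := @chain I J z j a c t mI mJ cI cJ (k - k') k' k (esym (subnKC (ltnW h))) kj Aa Ac (or_intror (conj ct ta)).
exact: A_out Ai.
Qed.

Lemma L4 (I J : mon -> Prop) : is_monideal I -> is_monideal J -> is_monideal (mprod I J).
Proof.
move=> mI mJ m m' [u [v [Iu [Jv e]]]] d.
exists u, [ffun i => v i + (m' i - m i)]; split => //; split.
  by apply: (mJ _ _ Jv) => i; rewrite ffunE leq_addr.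
apply/ffunP => i; have := d i; rewrite e !ffunE => h; by rewrite addnA subnKC.
Qed.

Theorem corollary2p13 :
  (forall I J : mon -> Prop, is_monideal I -> is_monideal J ->
     cw_polymatroidal I -> cw_polymatroidal J ->
     cw_polymatroidal (mprod I J)) /\
  (forall I : mon -> Prop, is_monideal I -> cw_polymatroidal I ->
     forall n : nat, 0 < n -> cw_polymatroidal (mpow I n)).
Proof.
split.
  move=> I J mI mJ cI cJ; apply: L2; apply: L3 => //; exact: L1.
move=> I mI cI n _.
suff : convall (mpow I n) /\ is_monideal (mpow I n) by case=> h _; exact: L2.
elim: n => [|n [IH1 IH2]] /=.
  by split => // z k c a t [hc _] [ha _] ct ta; split => //; lia.
split; last exact: L4.
by apply: L3 => //; exact: L1.
Qed.
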